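(* Let $E$ be a regular biordered set satisfying: (E1) there exists $0\in E$ with $0\,\omega\,e$ for every $e\in E$; (E2) there is a map $e\mapsto e'$ on $E$ such that for all $e,f\in E$: (i) $(e')'=e$; (ii) $f\,\omega^l\,e$ iff $e'\,\omega^r\,f'$; (iii) $f\,\omega^l\,e'$ iff $M(f,e)=\{0\}$. Let $e,f\in E$ with $1\le d_l(e,f)\le 3$. Then $\mathcal L(e)$ and $\mathcal L(f)$ are in perspective in the lattice $L(E)=E/\mathcal L$.
   Context: A regular biordered set is a partial algebra isomorphic to the set of idempotents $E(S)$ of a regular semigroup $S$ (regular: every $x$ has $y$ with $xyx=x$), where $ef$ (computed in $S$) is defined when $\{ef,fe\}\cap\{e,f\}\ne\emptyset$. In $E$: $\omega^l=\{(e,f): ef=e\}$, $\omega^r=\{(e,f): fe=e\}$, $\omega=\omega^l\cap\omega^r$; $M(e,f)=\{g\in E: g\,\omega^l\,e,\ g\,\omega^r\,f\}$. $\mathcal L=\omega^l\cap(\omega^l)^{-1}$, $\mathcal R=\omega^r\cap(\omega^r)^{-1}$; $E/\mathcal L$ is ordered by $\mathcal L(e)\le\mathcal L(f)$ iff $e\,\omega^l\,f$ (a lattice under (E1),(E2)). Two lattice elements are in perspective if they have a common complement. An $E$-sequence of length $m\ge1$ from $e$ to $f$ is $e=x_0,\dots,x_m=f$ with $x_{i-1}\,(\mathcal L\cup\mathcal R)\,x_i$ for each $i$; $d_l(e,f)$ is the least length of such a sequence with $x_0\,\mathcal L\,x_1$, and $d_l(e,f)=0$ if none exists. *)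

(* Defs.v *)
(* A regular biordered set is (up to isomorphism) the set E(S)
   of idempotents of a regular semigroup S; we work directly with E(S). *)
From Stdlib Require Import Arith Lia.

Section Biordered.
Variable T : Type.
Variable mul : T -> T -> T.

Definition associative_op : Prop :=
  forall x y z, mul x (mul y z) = mul (mul x y) z.
Definition regular_sg : Prop := forall x, exists y, mul (mul x y) x = x.

Definition idem (e : T) : Prop := mul e e = e.

Definition omega_l (e f : T) : Prop := mul e f = e.
Definition omega_r (e f : T) : Prop := mul f e = e.
Definition omega (e f : T) : Prop := omega_l e f /\ omega_r e f.
Definition inM (e f g : T) : Prop := idem g /\ omega_l g e /\ omega_r g f.
Definition rel_L (e f : T) : Prop := omega_l e f /\ omega_l f e.
Definition rel_R (e f : T) : Prop := omega_r e f /\ omega_r f e.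

Definition Eseq_L (e f : T) (m : nat) : Prop :=
  1 <= m /\ exists x : nat -> T,
    x 0 = e /\ x m = f /\ (forall i, i <= m -> idem (x i)) /\
    (forall i, i < m -> rel_L (x i) (x (S i)) \/ rel_R (x i) (x (S i))) /\
    rel_L (x 0) (x 1).

Definition is_dl (e f : T) (n : nat) : Prop :=
  (Eseq_L e f n /\ forall m, Eseq_L e f m -> n <= m)
  \/ (n = 0 /\ forall m, ~ Eseq_L e f m).

(* Lattice L(E) = E/L, ordered by omega_l, handled via representatives. *)
Definition is_glb (a b m : T) : Prop :=
  idem m /\ omega_l m a /\ omega_l m b /\
  forall z, idem z -> omega_l z a -> omega_l z b -> omega_l z m.
Definition is_lub (a b j : T) : Prop :=
  idem j /\ omega_l a j /\ omega_l b j /\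
  forall z, idem z -> omega_l a z -> omega_l b z -> omega_l j z.
Definition is_top (t : T) : Prop := idem t /\ forall g, idem g -> omega_l g t.

(* L(c) is a complement of L(a) in L(E), whose bottom is L(z) *)
Definition L_complement (z a c : T) : Prop :=
  (exists m, is_glb a c m /\ rel_L m z) /\
  (exists j, is_lub a c j /\ is_top j).

Definition L_perspective (z a b : T) : Prop :=
  exists c, idem c /\ L_complement z a c /\ L_complement z b c.
End Biordered.
Arguments associative_op {T}. Arguments regular_sg {T}. Arguments idem {T}. Arguments omega_l {T}. Arguments omega_r {T}. Arguments omega {T}. Arguments inM {T}. Arguments is_dl {T}. Arguments L_perspective {T}.

(* Main.v *)
Require Import Defs.
From Stdlib Require Import Arith Lia.

Lemma pre {T} (mul : T -> T -> T) (Hassoc : associative_op mul) u v w :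
  mul u v = w -> forall s, mul (mul s u) v = mul s w.
Proof. intros H s. rewrite <- Hassoc, H. reflexivity. Qed.

Lemma sandwich_zero {T} (mul : T -> T -> T) (Hassoc : associative_op mul)
  (Hreg : regular_sg mul) (z : T)
  (Hz : forall e, idem mul e -> mul z e = z /\ mul e z = z)
  a b (Ha : idem mul a) (Hb : idem mul b)
  (HM : forall g, inM mul a b g <-> g = z) : mul a b = z.
Proof.
  destruct (Hreg (mul a b)) as [y Hy].
  assert (Hy' := pre mul Hassoc _ _ _ Hy).
  assert (Hy'' : forall s, mul (mul (mul (mul (mul s a) b) y) a) b = mul (mul s a) b).
  { intros s. pose proof (Hy' s) as H. rewrite !Hassoc in H. exact H. }
  assert (Hh : mul (mul (mul (mul b y) (mul a b)) y) a = z).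
  { apply HM. split; [|split].
    - unfold idem. rewrite !Hassoc.
      unfold idem in Ha, Hb.
      rewrite ?(pre mul Hassoc _ _ _ Ha), ?(pre mul Hassoc _ _ _ Hb).
      rewrite Hy''. rewrite Hy''. reflexivity.
    - unfold omega_l. rewrite <- Hassoc, Ha. reflexivity.
    - unfold omega_r. rewrite !Hassoc, Hb. reflexivity. }
  assert (E : mul (mul a (mul (mul (mul (mul b y) (mul a b)) y) a)) b = mul a b).
  { rewrite !Hassoc. assert (Hyf := Hy). rewrite !Hassoc in Hyf.
    rewrite Hyf, Hyf. reflexivity. }
  rewrite Hh in E. rewrite <- E. destruct (Hz a Ha) as [_ H1]. rewrite H1.
  apply Hz; exact Hb.
Qed.

Section Aux.
Context {T : Type} (mul : T -> T -> T) (Hassoc : associative_op mul).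

Lemma rL_refl a : idem mul a -> rel_L T mul a a.
Proof. intros H; split; exact H. Qed.
Lemma rR_refl a : idem mul a -> rel_R T mul a a.
Proof. intros H; split; exact H. Qed.
Lemma rL_sym a b : rel_L T mul a b -> rel_L T mul b a.
Proof. intros [H1 H2]; split; assumption. Qed.
Lemma rR_sym a b : rel_R T mul a b -> rel_R T mul b a.
Proof. intros [H1 H2]; split; assumption. Qed.
Lemma rL_trans a b d : rel_L T mul a b -> rel_L T mul b d -> rel_L T mul a d.
Proof.
  unfold rel_L, omega_l. intros [H1 H2] [H3 H4]. split.
  - rewrite <- H1 at 1. rewrite <- Hassoc, H3. exact H1.
  - rewrite <- H4 at 1. rewrite <- Hassoc, H2. exact H4.
Qed.
Lemma rR_trans a b d : rel_R T mul a b -> rel_R T mul b d -> rel_R T mul a d.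
Proof.
  unfold rel_R, omega_r. intros [H1 H2] [H3 H4]. split.
  - rewrite <- H1 at 1. rewrite Hassoc, H3. exact H1.
  - rewrite <- H4 at 1. rewrite Hassoc, H2. exact H4.
Qed.

Lemma glb_sym a k m : is_glb T mul a k m -> is_glb T mul k a m.
Proof. intros [H1 [H2 [H3 H4]]]. split; [|split; [|split]]; auto. Qed.
Lemma lub_sym a k m : is_lub T mul a k m -> is_lub T mul k a m.
Proof. intros [H1 [H2 [H3 H4]]]. split; [|split; [|split]]; auto. Qed.
Lemma glb_L a a2 k m : rel_L T mul a a2 -> is_glb T mul a k m -> is_glb T mul a2 k m.
Proof.
  unfold is_glb, rel_L, omega_l. intros [A1 A2] [H1 [H2 [H3 H4]]].
  split; [|split; [|split]]; auto.
  - rewrite <- H2 at 1. rewrite <- Hassoc, A1. exact H2.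
  - intros w Hw W1 W2. apply H4; auto. rewrite <- W1 at 1. rewrite <- Hassoc, A2. exact W1.
Qed.
Lemma lub_L a a2 k m : rel_L T mul a a2 -> is_lub T mul a k m -> is_lub T mul a2 k m.
Proof.
  unfold is_lub, rel_L, omega_l. intros [A1 A2] [H1 [H2 [H3 H4]]].
  split; [|split; [|split]]; auto.
  - rewrite <- A2 at 1. rewrite <- Hassoc, H2. exact A2.
  - intros w Hw W1 W2. apply H4; auto. rewrite <- A1 at 1. rewrite <- Hassoc, W1. exact A1.
Qed.
Lemma comp_L_left z a a2 k : rel_L T mul a a2 -> L_complement T mul z a k -> L_complement T mul z a2 k.
Proof.
  intros A [[m [M1 M2]] [j [J1 J2]]]. split.
  - exists m. split; auto. apply (glb_L a); auto.
  - exists j. split; auto. apply (lub_L a); auto.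
Qed.
Lemma comp_L_right z a k k2 : rel_L T mul k k2 -> L_complement T mul z a k -> L_complement T mul z a k2.
Proof.
  intros A [[m [M1 M2]] [j [J1 J2]]]. split.
  - exists m. split; auto. apply glb_sym, (glb_L k); auto. apply glb_sym; auto.
  - exists j. split; auto. apply lub_sym, (lub_L k); auto. apply lub_sym; auto.
Qed.
End Aux.

Theorem proposition5p6 (T : Type) (mul : T -> T -> T)
  (Hassoc : associative_op mul) (Hreg : regular_sg mul)
  (z : T) (Hz : idem mul z)
  (E1 : forall e, idem mul e -> omega mul z e)
  (c : T -> T) (Hc : forall e, idem mul e -> idem mul (c e))
  (E2i : forall e, idem mul e -> c (c e) = e)
  (E2ii : forall e f, idem mul e -> idem mul f ->
            (omega_l mul f e <-> omega_r mul (c e) (c f)))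
  (E2iii : forall e f, idem mul e -> idem mul f ->
            (omega_l mul f (c e) <-> (forall g, inM mul f e g <-> g = z)))
  (e f : T) (He : idem mul e) (Hf : idem mul f)
  (Hd : exists n, is_dl mul e f n /\ 1 <= n <= 3) :
  L_perspective mul z e f.
Proof.
  assert (Hz2 : forall e, idem mul e -> mul z e = z /\ mul e z = z) by exact E1.
  assert (Hcz : forall a, idem mul a -> mul a (c a) = z).
  { intros a Ha. apply (sandwich_zero mul Hassoc Hreg z Hz2); auto.
    pose proof (E2iii (c a) a (Hc a Ha) Ha) as H. rewrite (E2i a Ha) in H.
    apply H. exact Ha. }
  assert (Comp : forall a, idem mul a -> L_complement T mul z a (c a)).
  { intros a Ha. split.
    - exists z. split; [|split; exact Hz].
      split; [exact Hz|split; [apply E1; auto|split; [apply E1; auto|]]].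
      intros w Hw H1 H2. unfold omega_l in *.
      rewrite <- (Hcz a Ha), Hassoc, H1, H2. reflexivity.
    - exists (c z). split.
      + split; [auto|split; [|split]].
        * apply (E2ii (c z) a (Hc z Hz) Ha). rewrite (E2i z Hz). apply E1; auto.
        * apply (E2ii (c z) (c a) (Hc z Hz) (Hc a Ha)). rewrite (E2i z Hz). apply E1; auto.
        * intros y Hy H1 H2.
          apply (E2ii y (c z) Hy (Hc z Hz)). rewrite (E2i z Hz). unfold omega_r.
          apply (E2ii y a Hy Ha) in H1. apply (E2ii y (c a) Hy (Hc a Ha)) in H2.
          rewrite (E2i a Ha) in H2. unfold omega_r in *.
          rewrite <- (Hcz a Ha), <- Hassoc, H1, H2. reflexivity.
      + split; auto. intros g Hg.
        apply (E2ii (c z) g (Hc z Hz) Hg). rewrite (E2i z Hz). apply E1; auto. }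
  assert (RL : forall x y, idem mul x -> idem mul y -> rel_R T mul x y -> rel_L T mul (c x) (c y)).
  { intros x y Hx Hy [R1 R2]. split.
    - apply (E2ii (c y) (c x) (Hc y Hy) (Hc x Hx)). rewrite !E2i; auto.
    - apply (E2ii (c x) (c y) (Hc x Hx) (Hc y Hy)). rewrite !E2i; auto. }
  assert (Good : forall a b k, idem mul a -> idem mul b -> idem mul k ->
            rel_L T mul a b -> rel_R T mul b k -> L_complement T mul z a (c k)).
  { intros a b k Ha Hb Hk H1 H2.
    apply (comp_L_left mul Hassoc z b); [apply rL_sym; auto|].
    apply (comp_L_right mul Hassoc z b (c b)); auto. }
  assert (Fin : forall k b1 b2, idem mul k -> idem mul b1 -> idem mul b2 ->
            rel_L T mul e b1 -> rel_R T mul b1 k -> rel_L T mul f b2 -> rel_R T mul b2 k ->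
            L_perspective mul z e f).
  { intros k b1 b2 Hk Hb1 Hb2 A1 A2 A3 A4. exists (c k). split; [auto|split].
    - apply (Good e b1 k); auto.
    - apply (Good f b2 k); auto. }
  destruct Hd as [n [[[[_ [x [Hx0 [Hxn [Hid [Hst HL]]]]]] _] | [Hn0 _]] Hn]]; [|lia].
  subst e f.
  assert (I0 := Hid 0 ltac:(lia)). assert (I1 := Hid 1 ltac:(lia)).
  assert (Hn' : n = 1 \/ n = 2 \/ n = 3) by lia.
  destruct Hn' as [-> | [-> | ->]].
  - apply (Fin (x 0) (x 0) (x 0)); auto using rL_refl, rR_refl, rL_sym.
  - assert (I2 := Hid 2 ltac:(lia)).
    destruct (Hst 1 ltac:(lia)) as [S1 | S1].
    + apply (Fin (x 0) (x 0) (x 0)); auto using rL_refl, rR_refl.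
      apply rL_sym. apply (rL_trans mul Hassoc _ (x 1)); auto.
    + apply (Fin (x 1) (x 1) (x 2)); auto using rL_refl, rR_refl, rR_sym.
  - assert (I2 := Hid 2 ltac:(lia)). assert (I3 := Hid 3 ltac:(lia)).
    destruct (Hst 1 ltac:(lia)) as [S1 | S1]; destruct (Hst 2 ltac:(lia)) as [S2 | S2].
    + apply (Fin (x 0) (x 0) (x 0)); auto using rL_refl, rR_refl.
      apply rL_sym. apply (rL_trans mul Hassoc _ (x 1)); auto.
      apply (rL_trans mul Hassoc _ (x 2)); auto.
    + apply (Fin (x 2) (x 2) (x 3)); auto using rL_refl, rR_refl, rR_sym.
      apply (rL_trans mul Hassoc _ (x 1)); auto.
    + apply (Fin (x 1) (x 1) (x 2)); auto using rL_refl, rR_refl, rR_sym, rL_sym.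
    + apply (Fin (x 1) (x 1) (x 3)); auto using rL_refl, rR_refl.
      apply rR_sym. apply (rR_trans mul Hassoc _ (x 2)); auto.
Qed.
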